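(* Let $M,N,S\ge1$ be integers. Suppose that for every $m\in[M]$, $\{X_{m,n}\}_{n\in[N]}$ are independent Bernoulli random variables, with $\sum_{m\in[M]}\mathbb E[X_{m,n}]=1$ for every $n\in[N]$, and let $\{C_{m,n}\}_{m\in[M],n\in[N]}\subset\mathbb R^S$ be constant vectors with $|C_{m,n}|_1\le C$ for all $m,n$. Then $$\sum_{s=1}^S\sum_{m=1}^M\mathbb E\Big|\sum_{n=1}^NC_{m,n}(s)\big(X_{m,n}-\mathbb E[X_{m,n}]\big)\Big|\le C\sqrt{MNS}.$$
   Context: $[M]=\{1,\dots,M\}$; $C_{m,n}(s)$ is the $s$-th coordinate of $C_{m,n}$; $|\cdot|_1$ is the $L_1$ norm. *)

(* Defs.v *)
From HB Require Import structures.
From mathcomp Require Import all_boot all_order all_algebra.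
From mathcomp Require Import all_classical all_reals all_analysis.
Set Implicit Arguments. Unset Strict Implicit. Unset Printing Implicit Defensive.
Import Order.TTheory GRing.Theory Num.Theory.
Local Open Scope classical_set_scope.
Local Open Scope ring_scope.

Definition bernoulli_rv d (T : measurableType d) (R : realType)
  (P : probability T R) (X : {RV P >-> R}) : Prop :=
  P [set t | X t = 0 \/ X t = 1] = 1%E.

Definition mutually_independent d (T : measurableType d) (R : realType)
  (P : probability T R) (I : finType) (X : I -> {RV P >-> R}) : Prop :=
  forall (J : {set I}) (B : I -> set R),
    (forall i, measurable (B i)) ->
    P (\big[setI/setT]_(i in J) (X i @^-1` B i)) =
    (\prod_(i in J) P (X i @^-1` B i))%E.

(* Main.v *)
Require Import Defs.
From HB Require Import structures.
From mathcomp Require Import all_boot all_order all_algebra.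
From mathcomp Require Import all_classical all_reals all_analysis.
From mathcomp Require Import ring lra.
Import Order.TTheory GRing.Theory Num.Theory.
Local Open Scope classical_set_scope.
Local Open Scope ring_scope.

Section helpers.
Context d (T : measurableType d) (R : realType) (P : probability T R).

Lemma Lfun_indic (A : set T) : measurable A -> (\1_A : T -> R) \in Lfun P 1.
Proof. move=> mA; apply/Lfun1_integrable; exact: integrable_indic. Qed.

Lemma expectation_sumI (n : nat) (F : 'I_n -> T -> R) :
  (forall i, F i \in Lfun P 1) ->
  ('E_P[\sum_(i < n) F i] = \sum_(i < n) 'E_P[F i])%E.
Proof.
elim: n F => [|n IH] F HF.
  by rewrite !big_ord0; exact: expectation_cst.
rewrite !big_ord_recr /= expectationD ?IH //.
by apply: rpred_sum => i _.
Qed.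

Lemma pre1_meas (X : {RV P >-> R}) (B : set R) : measurable B -> measurable (X @^-1` B).
Proof. move=> mB; rewrite -[X @^-1` B]setTI; exact: measurable_funP. Qed.

Lemma bern_ae (X : {RV P >-> R}) : bernoulli_rv X ->
  \forall t \ae P, X t = 0 \/ X t = 1.
Proof.
move=> hb.
have mG : measurable [set t | X t = 0 \/ X t = 1].
  exact: (@pre1_meas X ([set 0] `|` [set 1])) (measurableU _ _ (measurable_set1 _) (measurable_set1 _)).
exists (~` [set t | X t = 0 \/ X t = 1]); split.
- exact: measurableC.
- by rewrite probability_setC // hb subee.
- by [].
Qed.

Lemma bern_E (X : {RV P >-> R}) : bernoulli_rv X ->
  ('E_P[X] = P (X @^-1` [set 1%R]))%E.
Proof.
move=> hb; rewrite -expectation_indic; last exact: pre1_meas.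
rewrite !unlock; apply: ae_eq_integral => //.
- exact/measurable_realfun.measurable_EFinP.
- apply/measurable_realfun.measurable_EFinP; apply: measurable_realfun.measurable_indic; exact: pre1_meas.
  - apply: filterS (bern_ae _ hb) => t [] ht _ /=; rewrite indicE.
    + rewrite memNset; first by rewrite ht.
      by rewrite /= ht => /eqP; rewrite eq_sym oner_eq0.
    + by rewrite mem_set // ht.
Qed.


Lemma bern_indic (X : {RV P >-> R}) t : X t = 0 \/ X t = 1 ->
  X t = \1_(X @^-1` [set 1%R]) t.
Proof.
move=> [] ht; rewrite indicE.
+ rewrite memNset; first by rewrite ht.
  by rewrite /= ht => /eqP; rewrite eq_sym oner_eq0.
+ by rewrite mem_set // ht.
Qed.

Lemma scE (k x : R) : k *: x = k * x.
Proof. by []. Qed.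

Lemma amgm (lam y : R) : 0 < lam -> `|y| <= lam / 2 * y ^+ 2 + (2 * lam)^-1.
Proof.
move=> l0.
have il0 : 0 < lam^-1 by rewrite invr_gt0.
have li : lam * lam^-1 = 1 by rewrite mulfV // gt_eqF.
rewrite invfM -real_normK ?num_real //.
set a := `|y|.
have := mulr_ge0 (ltW il0) (sqr_ge0 (lam * a - 1)).
have : 0 <= a by rewrite normr_ge0.
nra.
Qed.

Lemma EfD (f g : T -> R) : f \in Lfun P 1 -> g \in Lfun P 1 ->
  ('E_P[f + g] = 'E_P[f] + 'E_P[g])%E.
Proof. exact: expectationD. Qed.

Lemma EfB (f g : T -> R) : f \in Lfun P 1 -> g \in Lfun P 1 ->
  ('E_P[f - g] = 'E_P[f] - 'E_P[g])%E.
Proof. exact: expectationB. Qed.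

Lemma EfZ (f : T -> R) k : f \in Lfun P 1 ->
  ('E_P[k *: f] = k%:E * 'E_P[f])%E.
Proof.
move=> h; rewrite (_ : k *: f = k \o* f); last by apply: boolp.funext => x; rewrite /= [RHS]mulrC.
exact: expectationZl.
Qed.

Lemma LfunZ (f : T -> R) k : f \in Lfun P 1 -> k *: f \in Lfun P 1.
Proof.
move=> h; rewrite (_ : k *: f = k \o* f); last by apply: boolp.funext => x; rewrite /= [RHS]mulrC.
exact: (Lfun_scale k (lexx 1) h).
Qed.

Lemma LfunC k : cst k \in Lfun P 1.
Proof. exact: Lfun_cst. Qed.


Lemma Ecst (r : R) : ('E_P[fun _ => r] = r%:E)%E.
Proof. exact: expectation_cst. Qed.

Lemma main_bound (N : nat) (X : 'I_N -> {RV P >-> R}) (c : 'I_N -> R) (lam : R) :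
  0 < lam ->
  (forall n, bernoulli_rv (X n)) -> mutually_independent X ->
  ('E_P[(fun t => `|\sum_(n < N) c n * (X n t - fine 'E_P[X n])|)%R] <=
  ((lam / 2 * \sum_(n < N) c n ^+ 2 * fine 'E_P[X n] + (2 * lam)^-1)%R)%:E)%E.
Proof.
move=> lam0 hb hind.
pose A n := X n @^-1` [set 1%R].
have mA n : measurable (A n) by exact: pre1_meas.
pose p n := fine (P (A n)).
have PA n : P (A n) = (p n)%:E by rewrite /p fineK // fin_num_measure.
have Ep n : fine 'E_P[X n] = p n by rewrite bern_E.
have p0 n : 0 <= p n by rewrite /p fine_ge0.
pose I n : T -> R := \1_(A n).
pose Y' t := \sum_(n < N) c n * (I n t - p n).
pose W n k : T -> R := \1_(A n `&` A k) - p k *: I n - p n *: I k + cst (p n * p k).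
pose Y2 := \sum_(n < N) \sum_(k < N) (c n * c k) *: W n k.
have HY t : Y' t ^+ 2 = Y2 t.
  rewrite /Y2 !fct_sumE expr2 /Y' big_distrlr /=.
  apply: eq_bigr => n _; rewrite fct_sumE; apply: eq_bigr => k _.
  rewrite /W /= indicI /= /I !fctE /= !scE; ring.
have LI n : I n \in Lfun P 1 by exact: Lfun_indic.
have LW n k : W n k \in Lfun P 1.
  rewrite /W; apply: rpredD; last exact: LfunC.
  apply: rpredB; last exact/LfunZ/LI.
  apply: rpredB; last exact/LfunZ/LI.
  exact/Lfun_indic/measurableI.
have LY2 : Y2 \in Lfun P 1.
  by apply: rpred_sum => n _; apply: rpred_sum => k _; exact: LfunZ.
pose g := (lam / 2) *: Y2 + cst ((2 * lam)^-1).
have Lg : g \in Lfun P 1 by apply: rpredD; [exact: LfunZ | exact: LfunC].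
have mg : measurable_fun setT g.
  by have := sub_Lfun_mfun Lg; rewrite inE.
have gE t : g t = lam / 2 * Y' t ^+ 2 + (2 * lam)^-1 by rewrite HY /g !fctE /= scE.
apply: (@le_trans _ _ 'E_P[g]%E).
  apply: expectation_le => //.
  - apply: measurableT_comp => //; apply: measurable_sum => n.
    apply: measurable_realfun.measurable_funM => //; apply: measurable_realfun.measurable_funB => //.
  - move=> t; rewrite gE; apply: addr_ge0.
      by apply: mulr_ge0; [apply: divr_ge0; [exact: ltW|] | exact: sqr_ge0].
    by rewrite invr_ge0 mulr_ge0 // ltW.
  - have Hae : \forall t \ae P, forall n, X n t = 0 \/ X n t = 1.
      by apply: filter_forall => n; exact: bern_ae.
    apply: filterS Hae => t Ht; rewrite gE.
    rewrite (_ : \sum_(n < N) _ = Y' t); first exact: amgm.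
    by apply: eq_bigr => n _; rewrite Ep (@bern_indic (X n) t (Ht n)).
pose q n k := fine (P (A n `&` A k)).
have Hq n k : n != k -> q n k = p n * p k.
  move=> nk; rewrite /q.
  have := hind [set n; k]%SET (fun _ => [set 1%R]) (fun _ => measurable_set1 _).
  rewrite big_setU1 ?big_set1 /=; last by rewrite inE.
  rewrite big_setU1 ?big_set1 /=; last by rewrite inE.
  by move=> ->; rewrite -/(A n) -/(A k) !PA.
have Hqn n : q n n = p n by rewrite /q setIid.
have EW n k : ('E_P[W n k] = (q n k - p n * p k)%:E)%E.
  rewrite /W EfD; last 2 first.
  - apply: rpredB; last exact/LfunZ/LI.
    apply: rpredB; last exact/LfunZ/LI.
    exact/Lfun_indic/measurableI.
  - exact: LfunC.
  rewrite EfB; last 2 first.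
  - apply: rpredB; last exact/LfunZ/LI.
    exact/Lfun_indic/measurableI.
  - exact/LfunZ/LI.
  rewrite EfB; last 2 first.
  - exact/Lfun_indic/measurableI.
  - exact/LfunZ/LI.
  rewrite !EfZ // /I. have E1 := expectation_indic P (measurableI _ _ (mA n) (mA k)). rewrite E1.
  rewrite !expectation_indic // Ecst.
  have Pq : P (A n `&` A k) = (q n k)%:E.
    by rewrite /q fineK // fin_num_measure //; exact: measurableI.
  rewrite Pq !PA -!EFinM -!EFinB -EFinD; congr EFin; ring.
  exact: LfunC.
have EY2 : ('E_P[Y2] =
    (\sum_(n < N) \sum_(k < N) c n * c k * (q n k - p n * p k))%:E)%E.
  rewrite expectation_sumI; last by move=> n; apply: rpred_sum => k _; exact: LfunZ.
  rewrite -sumEFin; apply: eq_bigr => n _.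
  rewrite expectation_sumI; last by move=> k; exact: LfunZ.
  rewrite -sumEFin; apply: eq_bigr => k _.
  by rewrite EfZ // EW -EFinM.
have Eg : ('E_P[g] = (lam / 2 *
    (\sum_(n < N) \sum_(k < N) c n * c k * (q n k - p n * p k)) + (2 * lam)^-1)%:E)%E.
  rewrite /g EfD; [|exact: LfunZ|exact: LfunC].
  by rewrite EfZ // EY2 expectation_cst -EFinM -EFinD.
rewrite Eg lee_fin lerD2r; apply: ler_wpM2l.
  by apply: divr_ge0; [exact: ltW|].
apply: ler_sum => n _; rewrite Ep (bigD1 n) //= Hqn big1 ?addr0; last first.
  by move=> k kn; rewrite Hq 1?eq_sym // subrr mulr0.
have := mulr_ge0 (sqr_ge0 (c n)) (sqr_ge0 (p n)).
have := p0 n.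
nra.
Qed.

End helpers.

Theorem lemma5 (d : measure_display) (T : measurableType d) (R : realType)
  (P : probability T R) (M N S : nat) (hM : (0 < M)%N) (hN : (0 < N)%N)
  (hS : (0 < S)%N)
  (X : 'I_M -> 'I_N -> {RV P >-> R})
  (Cv : 'I_M -> 'I_N -> 'I_S -> R) (C : R) :
  (forall m n, bernoulli_rv (X m n)) ->
  (forall m, mutually_independent (X m)) ->
  (forall n, (\sum_(m < M) 'E_P[X m n])%E = 1%E) ->
  (forall m n, \sum_(s < S) `|Cv m n s| <= C) ->
  (\sum_(s < S) \sum_(m < M)
      'E_P[(fun t => `| \sum_(n < N) Cv m n s * (X m n t - fine 'E_P[X m n]) |)%R]
   <= (C * Num.sqrt ((M * N * S)%:R))%:E)%E.
Proof.
move=> hb hind hsum hC.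
pose p m n := fine 'E_P[X m n].
have EX m n : ('E_P[X m n] = (p m n)%:E)%E.
  by rewrite /p fineK // bern_E // fin_num_measure // pre1_meas.
have p0 m n : 0 <= p m n.
  by rewrite /p bern_E // fine_ge0 // measure_ge0.
have psum n : \sum_(m < M) p m n = 1.
  have := hsum n; under eq_bigr do rewrite EX.
  by rewrite sumEFin => -[].
have C0 : 0 <= C.
  apply: le_trans (hC (Ordinal hM) (Ordinal hN)).
  by apply: sumr_ge0 => s _; exact: normr_ge0.
have habs m n s : `|Cv m n s| <= C.
  apply: le_trans (hC m n); rewrite (bigD1 s) //= lerDl.
  by apply: sumr_ge0 => i _; exact: normr_ge0.
have hsq m n : \sum_(s < S) Cv m n s ^+ 2 <= C ^+ 2.
  apply: (@le_trans _ _ (\sum_(s < S) C * `|Cv m n s|)).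
    apply: ler_sum => s _; rewrite -real_normK ?num_real // expr2.
    by apply: ler_wpM2r => //; exact: habs.
  by rewrite -mulr_sumr expr2; apply: ler_wpM2l => //; exact: hC.
case: (eqVneq C 0) => [C00 | Cn0].
  have Cz m n s : Cv m n s = 0.
    by apply/normr0_eq0/eqP; rewrite eq_le normr_ge0 andbT -C00 habs.
  rewrite C00 mul0r big1 // => s _; rewrite big1 // => m _.
  rewrite (_ : (fun t => _) = cst 0); first exact: expectation_cst.
  apply/funext => t; rewrite big1 ?normr0 // => n _; by rewrite Cz mul0r.
have Cp : 0 < C by rewrite lt_def Cn0 C0.
set a := Num.sqrt ((M * S)%:R : R).
set b := Num.sqrt (N%:R : R).
have a0 : 0 < a by rewrite sqrtr_gt0 ltr0n muln_gt0 hM hS.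
have b0 : 0 < b by rewrite sqrtr_gt0 ltr0n.
pose lam := a / (C * b).
have lam0 : 0 < lam by apply: divr_gt0 => //; exact: mulr_gt0.
apply: (@le_trans _ _ (\sum_(s < S) \sum_(m < M)
   ((lam / 2 * \sum_(n < N) Cv m n s ^+ 2 * p m n + (2 * lam)^-1)%R)%:E)%E).
  apply: lee_sum => s _; apply: lee_sum => m _.
  exact: (@main_bound _ _ _ P _ (X m) (fun n => Cv m n s) lam lam0 (hb m) (hind m)).
rewrite (eq_bigr _ (fun s _ => sumEFin _ _ _)) sumEFin lee_fin.
have K : \sum_(s < S) \sum_(m < M) \sum_(n < N) Cv m n s ^+ 2 * p m n
    <= C ^+ 2 * N%:R.
  rewrite exchange_big /=.
  under eq_bigr do rewrite exchange_big /=.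
  apply: (@le_trans _ _ (\sum_(m < M) \sum_(n < N) C ^+ 2 * p m n)).
    apply: ler_sum => m _; apply: ler_sum => n _; rewrite -mulr_suml.
    by apply: ler_wpM2r => //; exact: hsq.
  rewrite exchange_big /=.
  under eq_bigr do rewrite -mulr_sumr psum mulr1.
  by rewrite sumr_const card_ord mulr_natr.
under eq_bigr do rewrite big_split /= -mulr_sumr sumr_const card_ord.
rewrite big_split /= -mulr_sumr sumr_const card_ord.
apply: (@le_trans _ _ (lam / 2 * (C ^+ 2 * N%:R) + (2 * lam)^-1 *+ M *+ S)).
  rewrite lerD2r; apply: ler_wpM2l => //.
  by apply: divr_ge0 => //; exact: ltW.
have Hs : Num.sqrt ((M * N * S)%:R : R) = a * b.
  by rewrite /a /b -sqrtrM ?ler0n // -natrM mulnAC.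
have a2 : a ^+ 2 = (M * S)%:R by rewrite /a sqr_sqrtr // ler0n.
have b2 : b ^+ 2 = N%:R by rewrite /b sqr_sqrtr // ler0n.
rewrite Hs -mulrnA -(mulr_natr ((2 * lam)^-1) (M * S)) -a2 -b2.
rewrite le_eqVlt; apply/orP; left; apply/eqP; rewrite /lam; field.
by rewrite Cn0 !gt_eqF.
Qed.
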